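(* Let $m\ge 1$, let $h$ be an $m$-times weak Lefschetz O-sequence, $n=h_1$, $R=K[x_1,\ldots,x_n]$. Then $R/\mathcal{W}_m(h)$ has $m$-times the weak Lefschetz property.
   Context: $K$ is an infinite field of characteristic $0$. An O-sequence is a sequence of non-negative integers that is the Hilbert function of some standard graded $K$-algebra; a finite O-sequence $h:1=h_0,\ldots,h_s$, $h_s\ne0$, has length $s$. $h$ is unimodal if $h_0<h_1<\cdots<h_k\ge h_{k+1}\ge\cdots\ge h_s$ for some $k$; then $\Delta h:=1,h_1-h_0,\ldots,h_k-h_{k-1}$. An O-sequence is $0$-times weak Lefschetz by convention; $h$ is an $m$-times weak Lefschetz O-sequence if it is unimodal and $\Delta h$ is an $(m-1)$-times weak Lefschetz O-sequence. Monomials are ordered with $x_1>\cdots>x_n$, rev-lex = degree reverse lexicographic order. Define $\mathcal{W}_0(g)=\mathrm{Lex}(g)$, the lex-segment ideal in $K[x_1,\ldots,x_{g_1}]$ with Hilbert function $g$ (degree-$d$ component spanned by the largest monomials of degree $d$ in lex order, as many as needed). For $m\ge1$, with $R'=K[x_1,\ldots,x_{n-1}]$: start with $I=\mathcal{W}_{m-1}(\Delta h)R$ (ideal of $R'$ extended to $R$); while the Hilbert function of $R/I$ differs from $h$, let $d_0$ be the least degree where they differ, $r=\dim_K(R/I)_{d_0}-h_{d_0}>0$, and add to $I$ the $r$ largest rev-lex monomials of degree $d_0$ not in $I$. The procedure terminates with an ideal $\mathcal{W}_m(h)$ such that $R/\mathcal{W}_m(h)$ has Hilbert function $h$. A standard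 graded algebra $A$ (Artinian in the paper) has the weak Lefschetz property (WLP) if there is $\ell\in A_1$ (a weak Lefschetz element, WLE) such that multiplication $\times\ell:A_d\to A_{d+1}$ has maximal rank for all $d\ge1$; $A$ has $m$-times the WLP if there are $\ell_1,\ldots,\ell_m\in A_1$ with $\ell_1$ a WLE for $A$ and $\ell_i$ a WLE for $A/(\ell_1,\ldots,\ell_{i-1})$ for $i=2,\ldots,m$. *)

(* Defs.v *)
From HB Require Import structures.
From mathcomp Require Import all_boot all_order all_algebra.
From mathcomp Require Import mpoly.
Set Implicit Arguments. Unset Strict Implicit. Unset Printing Implicit Defensive.
Import Order.TTheory GRing.Theory.
Local Open Scope ring_scope.

(* Combinatorics of monomials.  A monomial x_1^{a_1}...x_k^{a_k} of    *)
(* K[x_1,...,x_k] is represented by its exponent list [:: a_1; ...; a_k]. *)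

Fixpoint monos (k d : nat) : seq (seq nat) :=
  match k with
  | 0 => if d == 0%N then [:: [::]] else [::]
  | k'.+1 => flatten [seq [seq i :: u | u <- monos k' (d - i)] | i <- iota 0 d.+1]
  end.

Definition mdiv (v u : seq nat) : bool := all2 leq v u.

Definition divs (u : seq nat) : seq (seq nat) :=
  flatten [seq monos (size u) e | e <- iota 0 (sumn u).+1].
Definition divs_lt (u : seq nat) : seq (seq nat) :=
  flatten [seq monos (size u) e | e <- iota 0 (sumn u)].

Fixpoint lex_gt (u v : seq nat) : bool :=
  match u, v with
  | a :: u', b :: v' => (b < a)%N || ((a == b) && lex_gt u' v')
  | _, _ => false
  end.

(* u >_revlex v (for monomials of the same degree): the last nonzero
   entry of u - v is negative *)
Definition revlex_gt (u v : seq nat) : bool := lex_gt (rev v) (rev u).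

(* Sequences.  A finite sequence h_0,...,h_s is a [seq nat]; h_d := 0 for d > s. *)
Definition hv (h : seq nat) (d : nat) : nat := nth 0%N h d.

(* The peak index k: h_0 < ... < h_k >= h_{k+1} *)
Definition peak (h : seq nat) : nat :=
  find (fun i => (hv h i.+1 <= hv h i)%N) (iota 0 (size h)).

Definition unimodal (h : seq nat) : Prop :=
  exists k, (k < size h)%N /\
    (forall i, (i < k)%N -> (hv h i < hv h i.+1)%N) /\
    (forall i, (k <= i)%N -> (hv h i.+1 <= hv h i)%N).

Definition delta (h : seq nat) : seq nat :=
  1%N :: [seq (hv h i.+1 - hv h i)%N | i <- iota 0 (peak h)].

Definition gen_ideal (K : fieldType) (N : nat) (S : {mpoly K[N]} -> Prop)
    (f : {mpoly K[N]}) : Prop :=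
  exists k (g s : 'I_k -> {mpoly K[N]}),
    (forall i, S (s i)) /\ f = \sum_(i < k) g i * s i.

(* dim_K (R/J)_d = c : there are c homogeneous polynomials of degree d
   whose classes form a K-basis of (R/J)_d *)
Definition hilb_at (K : fieldType) (N : nat) (J : {mpoly K[N]} -> Prop)
    (d c : nat) : Prop :=
  exists b : 'I_c -> {mpoly K[N]},
    (forall i, b i \is d.-homog) /\
    (forall a : 'I_c -> K, J (\sum_(i < c) a i *: b i) -> forall i, a i = 0) /\
    (forall f : {mpoly K[N]}, f \is d.-homog ->
       exists a : 'I_c -> K, J (f - \sum_(i < c) a i *: b i)).

(* finite O-sequence 1 = h_0, ..., h_s, h_s <> 0: the Hilbert function of
   some standard graded K-algebra R/J, J a homogeneous ideal *)
Definition Oseq (K : fieldType) (h : seq nat) : Prop :=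
  (0 < size h)%N /\ last 0%N h <> 0%N /\
  exists (N : nat) (S : {mpoly K[N]} -> Prop),
    (forall f, S f -> exists e, f \is e.-homog) /\
    forall d, hilb_at (gen_ideal S) d (hv h d).

Fixpoint mWLseq (K : fieldType) (m : nat) (h : seq nat) : Prop :=
  match m with
  | 0 => Oseq K h
  | m'.+1 => Oseq K h /\ unimodal h /\ mWLseq K m' (delta h)
  end.

(* The monomial ideals Lex(g) and W_m(h), given by the sets of monomials
   they contain (as boolean predicates on exponent lists). *)

(* Lex(g) in K[x_1,...,x_{g_1}]: degree-d part = the (#monomials - g_d)
   lex-largest monomials of degree d *)
Definition lexI (g : seq nat) (u : seq nat) : bool :=
  let k := hv g 1 in let d := sumn u in
  (size u == k) &&
  (size [seq v <- monos k d | lex_gt v u] < size (monos k d) - hv g d)%N.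

(* monomials of degree d in the ideal generated by G0 (all degrees) and by
   the monomials of degree < d satisfying P *)
Definition inJ (G0 P : seq nat -> bool) (u : seq nat) : bool :=
  has (fun v => G0 v && mdiv v u) (divs u) ||
  has (fun v => P v && mdiv v u) (divs_lt u).

(* one step of the procedure at degree d: add the r largest rev-lex
   monomials of degree d not yet in the ideal, r = dim (R/I)_d - h_d
   (nothing added when this is <= 0) *)
Definition newdeg (n : nat) (h : seq nat) (G0 P : seq nat -> bool) (d : nat)
    (u : seq nat) : bool :=
  let C := [seq v <- monos n d | ~~ inJ G0 P v] in
  let r := (size C - hv h d)%N in
  inJ G0 P u || ((u \in C) && (size [seq v <- C | revlex_gt v u] < r)%N).

(* the ideal produced by the procedure, valid for monomials of degree <= d *)
Fixpoint Wupto (n : nat) (h : seq nat) (G0 : seq nat -> bool) (d : nat)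
    : seq nat -> bool :=
  match d with
  | 0 => newdeg n h G0 (fun _ => false) 0
  | d'.+1 => let P := Wupto n h G0 d' in
      fun u => if (sumn u <= d')%N then P u else newdeg n h G0 P d'.+1 u
  end.

Fixpoint Wm (m : nat) (h : seq nat) : seq nat -> bool :=
  match m with
  | 0 => lexI h
  | m'.+1 =>
      let n := hv h 1 in
      let W' := Wm m' (delta h) in
      (* monomials of W_{m-1}(Delta h) in K[x_1..x_{n-1}], viewed in R *)
      let G0 := fun v => (nth 0%N v n.-1 == 0%N) && W' (take n.-1 v) in
      fun u => (size u == n) && Wupto n h G0 (sumn u) u
  end.

Definition mon_ideal (K : fieldType) (n : nat) (W : seq nat -> bool)
    : {mpoly K[n]} -> Prop :=
  gen_ideal (fun f => exists u : 'X_{1..n}, W (tval (multinom_val u)) /\ f = 'X_[u]).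

(* Weak Lefschetz property of R/J.  Multiplication by l : A_d -> A_{d+1}
   has maximal rank iff it is injective or surjective. *)
Definition WLE (K : fieldType) (n : nat) (J : {mpoly K[n]} -> Prop)
    (l : {mpoly K[n]}) : Prop :=
  l \is 1.-homog /\
  forall d, (1 <= d)%N ->
    (forall f : {mpoly K[n]}, f \is d.-homog -> J (l * f) -> J f) \/
    (forall g : {mpoly K[n]}, g \is d.+1.-homog ->
       exists f, f \is d.-homog /\ J (g - l * f)).

Definition mWLP (K : fieldType) (n : nat) (J : {mpoly K[n]} -> Prop) (m : nat)
    : Prop :=
  exists l : 'I_m -> {mpoly K[n]},
    forall i : 'I_m,
      WLE (gen_ideal (fun f => J f \/ exists j : 'I_m, (j < i)%N /\ f = l j)) (l i).

(* Main.v *)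
Require Import Defs.
From HB Require Import structures.
From mathcomp Require Import all_boot all_order all_algebra.
From mathcomp Require Import mpoly.
Local Open Scope ring_scope.
From mathcomp Require Import zify.
From Stdlib Require Import Classical.
Set Implicit Arguments. Unset Strict Implicit. Unset Printing Implicit Defensive.
Import GRing.Theory.
Local Open Scope nat_scope.


Lemma mdivP v u : reflect (size v = size u /\ forall i, nth 0 v i <= nth 0 u i) (mdiv v u).
Proof.
rewrite /mdiv; elim: v u => [|a v IH] [|b u] /=.
- by apply: ReflectT; split => // i; rewrite nth_nil.
- by apply: ReflectF => -[].
- by apply: ReflectF => -[].
- apply: (iffP andP) => [[ab /IH [s H]]|[s H]].
    by split; [rewrite s | case].
  split; first exact: (H 0).
  by apply/IH; split; [case: s | move=> i; exact: (H i.+1)].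
Qed.

Lemma mdiv_refl u : mdiv u u.
Proof. by apply/mdivP; split. Qed.

Lemma mdiv_trans v u w : mdiv v u -> mdiv u w -> mdiv v w.
Proof.
move=> /mdivP [s1 H1] /mdivP [s2 H2]; apply/mdivP; split; first by rewrite s1.
by move=> i; apply: leq_trans (H1 i) (H2 i).
Qed.

Lemma mdiv_size v u : mdiv v u -> size v = size u.
Proof. by case/mdivP. Qed.

Lemma mdiv_sumn v u : mdiv v u -> sumn v <= sumn u.
Proof.
rewrite /mdiv; elim: v u => [|a v IH] [|b u] //= /andP [ab /IH]; exact: leq_add.
Qed.

Lemma mem_monos k d u : (u \in monos k d) = (size u == k) && (sumn u == d).
Proof.
elim: k d u => [|k IH] d u.
  by rewrite /=; case: u => [|a u]; case: d => //=; rewrite andbF.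
have -> : monos k.+1 d = flatten [seq [seq i :: u | u <- monos k (d - i)] | i <- iota 0 d.+1] by [].
apply/flattenP/andP => [[s /mapP [i]]|[/eqP su /eqP sd]].
  rewrite mem_iota add0n => /andP [_ id] -> /mapP [u' ] .
  rewrite IH => /andP [/eqP s' /eqP d'] ->; split => //=; first by rewrite s'.
  by rewrite d' subnKC // -ltnS.
case: u su sd => [|a u] // [su] sd.
exists [seq a :: u0 | u0 <- monos k (d - a)].
  apply/mapP; exists a => //; rewrite mem_iota add0n /= ltnS -sd leq_addr //.
apply/mapP; exists u => //; rewrite IH su eqxx /= -sd /= addKn //.
Qed.

Lemma uniq_flatten_head (s : seq nat) (F : nat -> seq (seq nat)) :
  uniq s -> (forall i, uniq (F i)) ->
  (forall i u, u \in F i -> ohead u = Some i) -> uniq (flatten (map F s)).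
Proof.
move=> us uF hF; elim: s us => [|x s IH] //= /andP [xs us].
rewrite cat_uniq uF IH // andbT; apply/hasPn => u /flattenP [t /mapP [y ys ->] uy].
apply/negP => ux; move: (hF _ _ uy) (hF _ _ ux) => -> [ey].
by move: xs; rewrite -ey ys.
Qed.

Lemma uniq_monos k d : uniq (monos k d).
Proof.
elim: k d => [|k IH] d; first by rewrite /=; case: (d == 0).
have -> : monos k.+1 d = flatten [seq [seq i :: u | u <- monos k (d - i)] | i <- iota 0 d.+1] by [].
apply: uniq_flatten_head; first exact: iota_uniq.
  by move=> i; rewrite map_inj_uniq // => x y [].
by move=> i u /mapP [v _ ->].
Qed.

Lemma mem_divs u v : (v \in divs u) = (size v == size u) && (sumn v <= sumn u).
Proof.
apply/flattenP/andP => [[s /mapP [e]]|[/eqP su sd]].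
  rewrite mem_iota add0n ltnS => /andP [_ ed] -> ; rewrite mem_monos => /andP [/eqP -> /eqP ->].
  by split.
exists (monos (size u) (sumn v)); last by rewrite mem_monos su !eqxx.
by apply/mapP; exists (sumn v) => //; rewrite mem_iota add0n ltnS sd.
Qed.

Lemma mem_divs_lt u v : (v \in divs_lt u) = (size v == size u) && (sumn v < sumn u).
Proof.
apply/flattenP/andP => [[s /mapP [e]]|[/eqP su sd]].
  rewrite mem_iota add0n => /andP [_ ed] -> ; rewrite mem_monos => /andP [/eqP -> /eqP ->].
  by split.
exists (monos (size u) (sumn v)); last by rewrite mem_monos su !eqxx.
by apply/mapP; exists (sumn v) => //; rewrite mem_iota add0n sd.
Qed.

Definition clb (W : seq nat -> bool) (u : seq nat) : bool := has (fun v => W v && mdiv v u) (divs u).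

Lemma clbP (W : seq nat -> bool) u : reflect (exists v, W v /\ mdiv v u) (clb W u).
Proof.
apply: (iffP hasP) => [[v _ /andP [? ?]]|[v [wv vu]]]; first by exists v.
exists v; last by rewrite wv vu.
by rewrite mem_divs (mdiv_size vu) eqxx mdiv_sumn.
Qed.

Lemma clb_self (W : seq nat -> bool) u : W u -> clb W u.
Proof. by move=> wu; apply/clbP; exists u; split => //; exact: mdiv_refl. Qed.

Lemma clb_trans (W : seq nat -> bool) v u : clb W v -> mdiv v u -> clb W u.
Proof.
by move=> /clbP [w [ww wv]] vu; apply/clbP; exists w; split => //; exact: mdiv_trans wv vu.
Qed.

Lemma inJP (G0 P : seq nat -> bool) u : reflect ((exists v, G0 v /\ mdiv v u) \/ (exists v, P v /\ mdiv v u /\ sumn v < sumn u))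
  (inJ G0 P u).
Proof.
rewrite /inJ; apply: (iffP orP) => [[/clbP H|/hasP [v]]|[H|[v [pv [vu vs]]]]].
- by left.
- by rewrite mem_divs_lt => /andP [_ vs] /andP [pv vu]; right; exists v.
- by left; apply/clbP.
- right; apply/hasP; exists v; last by rewrite pv vu.
  by rewrite mem_divs_lt (mdiv_size vu) eqxx vs.
Qed.

Lemma lex_irr u : lex_gt u u = false.
Proof. by elim: u => //= a u ->; rewrite ltnn eqxx. Qed.

Lemma lex_trans u v w : lex_gt u v -> lex_gt v w -> lex_gt u w.
Proof.
elim: u v w => [|a u IH] [|b v] [|c w] //=.
move=> /orP [ba|/andP [/eqP ab uv]] /orP [cb|/andP [/eqP bc vw]].
- by rewrite (ltn_trans cb ba).
- by rewrite -bc ba.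
- by rewrite ab cb.
- by rewrite ab bc eqxx (IH _ _ uv vw) orbT.
Qed.

Lemma lex_total u v : size u = size v -> u != v -> lex_gt u v || lex_gt v u.
Proof.
elim: u v => [|a u IH] [|b v] //= [s] neq.
case: (ltngtP a b) => [ab|ba|ab] /=; rewrite ?orbT //.
subst; apply: IH => //; apply: contra neq => /eqP ->; exact: eqxx.
Qed.

Lemma count_sub_in (T : eqType) (p q : pred T) (s : seq T) :
  (forall x, x \in s -> p x -> q x) -> count p s <= count q s.
Proof.
elim: s => //= y s IH H; apply: leq_add; last by apply: IH => x xs; apply: H; rewrite inE xs orbT.
by case py: (p y) => //; rewrite (H y) // inE eqxx.
Qed.

Lemma count_lt_sub (T : eqType) (p q : pred T) (s : seq T) :
  (forall x, x \in s -> p x -> q x) -> (exists x, x \in s /\ q x /\ ~~ p x) ->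
  count p s < count q s.
Proof.
elim: s => [|y s IH] H [x [xin [qx npx]]] //=.
move: xin; rewrite inE => /orP [/eqP exy|xs].
  subst; rewrite (negbTE npx) qx add0n add1n ltnS.
  by apply: count_sub_in => z zs; apply: H; rewrite inE zs orbT.
have := IH (fun z zs => H z (introT orP (or_intror zs))) (ex_intro _ x (conj xs (conj qx npx))).
case py: (p y); last by move=> h; apply: leq_trans h _; rewrite leq_addl.
by rewrite (H y) // inE eqxx.
Qed.

Lemma rank_bound (T : eqType) (gt : rel T) (s : seq T) t :
  uniq s ->
  (forall x, x \in s -> ~~ gt x x) ->
  (forall x y z, x \in s -> y \in s -> z \in s -> gt x y -> gt y z -> gt x z) ->
  (forall x y, x \in s -> y \in s -> x != y -> gt x y || gt y x) ->
  count (fun u => t <= count (gt^~ u) s) s <= size s - t.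
Proof.
move=> us irr tr tot.
pose r u := count (gt^~ u) s.
have rlt u : u \in s -> r u < size s.
  move=> us'; rewrite -(count_predT s); apply: count_lt_sub => //.
  by exists u; split => //; split => //; exact: irr.
have rlt2 x y : x \in s -> y \in s -> gt x y -> r x < r y.
  move=> xs ys gxy; apply: count_lt_sub.
    by move=> z zs gzx; exact: tr gzx gxy.
  by exists x; split => //; split => //; exact: irr.
have rinj : {in s &, injective r}.
  move=> x y xs ys rxy; apply/eqP; apply/negPn/negP => nxy.
  case/orP: (tot x y xs ys nxy) => g.
    by move: (rlt2 _ _ xs ys g); rewrite rxy ltnn.
  by move: (rlt2 _ _ ys xs g); rewrite rxy ltnn.
rewrite -size_filter -(size_map r).
have -> : size s - t = size (iota t (size s - t)) by rewrite size_iota.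
apply: uniq_leq_size.
  rewrite map_inj_in_uniq ?filter_uniq // => x y; rewrite !mem_filter.
  by move=> /andP [_ xs] /andP [_ ys]; exact: rinj.
move=> y /mapP [x]; rewrite mem_filter => /andP [tr' xs] ->.
rewrite mem_iota tr' /=; have := rlt x xs; rewrite /r; lia.
Qed.


Definition Plow n h G0 d : seq nat -> bool :=
  if d is d'.+1 then Wupto n h G0 d' else (fun _ => false).

Lemma Wupto_at n h G0 d u : sumn u = d -> Wupto n h G0 d u = newdeg n h G0 (Plow n h G0 d) d u.
Proof. by case: d => [|d] su //=; rewrite su ltnn. Qed.

Lemma Wupto_stable n h G0 d v : sumn v <= d -> Wupto n h G0 d v = Wupto n h G0 (sumn v) v.
Proof.
elim: d => [|d IH] H; first by move: H; rewrite leqn0 => /eqP ->.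
case: (leqP (sumn v) d) => H2; first by rewrite /= H2 IH.
have e : sumn v = d.+1 by lia.
by rewrite e.
Qed.

Definition Wp n h G0 (u : seq nat) : bool := (size u == n) && Wupto n h G0 (sumn u) u.

Lemma inJ_low n h G0 d u : size u = n -> sumn u = d ->
  inJ G0 (Plow n h G0 d) u = inJ G0 (Wp n h G0) u.
Proof.
move=> su sd; rewrite /inJ; congr orb; apply: eq_in_has => v.
rewrite mem_divs_lt => /andP [/eqP sv lt]; congr andb.
rewrite /Wp sv su eqxx /=; case: d sd => [|d] sd; first by rewrite sd in lt.
by rewrite /= Wupto_stable //; lia.
Qed.

Definition Cset n h G0 d := [seq v <- monos n d | ~~ inJ G0 (Wp n h G0) v].

Lemma Wp_eq n h G0 u : size u = n ->
  Wp n h G0 u = inJ G0 (Wp n h G0) u ||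
    ((u \in Cset n h G0 (sumn u)) &&
     (size [seq v <- Cset n h G0 (sumn u) | revlex_gt v u] < size (Cset n h G0 (sumn u)) - hv h (sumn u))).
Proof.
move=> su; rewrite {1}/Wp su eqxx /= Wupto_at // /newdeg inJ_low //.
have -> : [seq v <- monos n (sumn u) | ~~ inJ G0 (Plow n h G0 (sumn u)) v] = Cset n h G0 (sumn u) => //.
apply: eq_in_filter => v; rewrite mem_monos => /andP [/eqP sv /eqP dv].
by rewrite inJ_low.
Qed.

Lemma revlex_irr u : revlex_gt u u = false.
Proof. exact: lex_irr. Qed.

Lemma revlex_trans u v w : revlex_gt u v -> revlex_gt v w -> revlex_gt u w.
Proof. rewrite /revlex_gt => h1 h2; exact: lex_trans h2 h1. Qed.

Lemma revlex_total u v : size u = size v -> u != v -> revlex_gt u v || revlex_gt v u.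
Proof.
move=> s neq; rewrite /revlex_gt orbC; apply: lex_total; first by rewrite !size_rev.
by rewrite (inj_eq (can_inj revK)).
Qed.

Definition G0f j g := fun v : seq nat => (nth 0 v (hv g 1).-1 == 0) && Wm j (delta g) (take (hv g 1).-1 v).

Lemma Wm_S j g : Wm j.+1 g = Wp (hv g 1) g (G0f j g).
Proof. by []. Qed.

Lemma HFub j g d : count (predC (clb (Wm j g))) (monos (hv g 1) d) <= hv g d.
Proof.
case: j => [|j].
  set k := hv g 1; set M := monos k d.
  apply: leq_trans (_ : count (fun u => size M - hv g d <= count (lex_gt^~u) M) M <= _).
    apply: count_sub_in => u uM /= ncl.
    move: uM; rewrite mem_monos => /andP [/eqP su /eqP sd].
    have : ~~ lexI g u by apply: contra ncl; exact: clb_self.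
    by rewrite /lexI su eqxx /= sd size_filter -leqNgt.
  apply: leq_trans (rank_bound _ _ _ _ _) _.
  - exact: uniq_monos.
  - by move=> x _; rewrite lex_irr.
  - move=> x y z _ _ _; exact: lex_trans.
  - move=> x y; rewrite !mem_monos => /andP [/eqP sx _] /andP [/eqP sy _]; apply: lex_total.
    by rewrite sx sy.
  - by move: (size M) (hv g d) => a b; lia.
rewrite Wm_S; set n := hv g 1; set G0 := G0f j g.
set C := Cset n g G0 d; set r := size C - hv g d.
apply: leq_trans (_ : count (fun u => r <= count (revlex_gt^~u) C) C <= _); last first.
  apply: leq_trans (rank_bound _ _ _ _ _) _.
  - by rewrite filter_uniq // uniq_monos.
  - by move=> x _; rewrite revlex_irr.
  - move=> x y z _ _ _; exact: revlex_trans.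
  - move=> x y; rewrite !mem_filter !mem_monos => /andP [_ /andP [/eqP sx _]] /andP [_ /andP [/eqP sy _]].
    by apply: revlex_total; rewrite sx sy.
  - by rewrite /r; move: (size C) (hv g d) => a b; lia.
rewrite /C /Cset count_filter.
apply: count_sub_in => u uM /= ncl.
move: (uM); rewrite mem_monos => /andP [/eqP su /eqP sd].
have : ~~ Wp n g G0 u by apply: contra ncl; exact: clb_self.
rewrite Wp_eq // negb_or sd => /andP [nJ H2]; rewrite nJ /=.
move: H2; rewrite /Cset mem_filter nJ uM /= -leqNgt => H; rewrite andbT /r /C /Cset; by rewrite !size_filter in H *.
Qed.


Lemma peak_spec g : unimodal g ->
  (forall i, i < peak g -> hv g i < hv g i.+1) /\ (forall i, peak g <= i -> hv g i.+1 <= hv g i).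
Proof.
case=> k [ks [Hlt Hge]]; suff -> : peak g = k by [].
rewrite /peak; set a := (fun i => hv g i.+1 <= hv g i).
have ak : a k by rewrite /a Hge.
have le : find a (iota 0 (size g)) <= k.
  apply: contraT; rewrite -ltnNge => lt.
  by have := before_find 0 lt; rewrite nth_iota // add0n ak.
apply/eqP; rewrite eqn_leq le /=; apply: contraT; rewrite -ltnNge => lt.
have hs : has a (iota 0 (size g)) by apply/hasP; exists k => //; rewrite mem_iota add0n ks.
have := nth_find 0 hs; rewrite nth_iota; last by apply: leq_ltn_trans le ks.
by rewrite add0n /a leqNgt Hlt.
Qed.

Lemma hv_deltaS g i : hv (delta g) i.+1 = if i < peak g then hv g i.+1 - hv g i else 0.
Proof.
rewrite /hv /delta /=; case: ifP => H.
  by rewrite (nth_map 0) ?size_iota // nth_iota.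
by rewrite nth_default // size_map size_iota leqNgt H.
Qed.

Lemma sum_delta g d : 1 <= hv g 0 -> (forall i, i < peak g -> hv g i < hv g i.+1) ->
  d <= peak g -> sumn [seq hv (delta g) i | i <- iota 0 d.+1] <= hv g d.
Proof.
move=> h0 Hlt; elim: d => [|d IH] dk; first by rewrite /= addn0.
rewrite -addn1 iotaD map_cat sumn_cat.
have -> : sumn [seq hv (delta g) i | i <- iota (0 + d.+1) 1] = hv (delta g) d.+1 by rewrite add0n /= addn0.
rewrite hv_deltaS dk.
have := IH (ltnW dk); have := Hlt d dk; lia.
Qed.

Lemma leq_sumn_map (T : eqType) (s : seq T) (f g : T -> nat) :
  (forall i, i \in s -> f i <= g i) -> sumn (map f s) <= sumn (map g s).
Proof.
elim: s => //= a s IH H; apply: leq_add; first by apply: H; rewrite inE eqxx.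
by apply: IH => i ins; apply: H; rewrite inE ins orbT.
Qed.

Lemma Wm_size j g u : Wm j g u -> size u = hv g 1.
Proof. by case: j => [|j] /andP [/eqP]. Qed.

Lemma mdiv_take k v u : mdiv v u -> mdiv (take k v) (take k u).
Proof.
move=> /mdivP [s H]; apply/mdivP; split; first by rewrite !size_take s.
move=> i; case: (ltnP i k) => ik; first by rewrite !nth_take.
rewrite !nth_default // size_take_min; apply: leq_trans ik; exact: geq_minl.
Qed.

Lemma sumn_zero s : (forall i, nth 0 s i = 0) -> sumn s = 0.
Proof. elim: s => // a s IH H; have a0 : a = 0 := H 0; rewrite /= a0 IH // => i; exact: (H i.+1). Qed.

Lemma sumn_take_le k s : sumn (take k s) <= sumn s.
Proof. by rewrite -{2}(cat_take_drop k s) sumn_cat leq_addr. Qed.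

Lemma sumn_take_zero k s : (forall i, k <= i -> nth 0 s i = 0) -> sumn (take k s) = sumn s.
Proof.
move=> H; rewrite -{2}(cat_take_drop k s) sumn_cat (@sumn_zero (drop k s)) ?addn0 //.
by move=> i; rewrite nth_drop H // leq_addr.
Qed.

Lemma take_inj n x y : 1 <= n -> size x = n -> size y = n -> sumn x = sumn y ->
  take n.-1 x = take n.-1 y -> x = y.
Proof.
move=> n1 sx sy ss tt.
have dr z : size z = n -> drop n.-1 z = [:: nth 0 z n.-1].
  move=> sz; rewrite (drop_nth 0); last by rewrite sz; lia.
  by rewrite drop_oversize // sz; lia.
have e z : size z = n -> z = take n.-1 z ++ [:: nth 0 z n.-1] by move=> sz; rewrite -dr // cat_take_drop.
rewrite (e x sx) (e y sy) tt; congr (_ ++ [:: _]).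
move: ss; rewrite {1}(e x sx) {1}(e y sy) !sumn_cat tt /=; lia.
Qed.

Fixpoint incl (u : seq nat) (t : nat) : seq nat :=
  match u with
  | [::] => [::]
  | a :: u' => match t with 0 => a.+1 :: u' | t'.+1 => a :: incl u' t' end
  end.

Lemma size_incl u t : size (incl u t) = size u.
Proof. by elim: u t => //= a u IH [|t] //=; rewrite IH. Qed.

Lemma nth_incl u t i : nth 0 (incl u t) i = nth 0 u i + ((i == t) && (t < size u)).
Proof.
elim: u t i => [|a u IH] [|t] [|i] //=; rewrite ?addn0 ?addn1 ?andbF //.
Qed.

Lemma sumn_incl u t : t < size u -> sumn (incl u t) = (sumn u).+1.
Proof. elim: u t => // a u IH [|t] /= lt; first by rewrite addSn. by rewrite IH // addnS. Qed.

Definition pos a b (u : seq nat) : Prop := exists t, a <= t < b /\ 0 < nth 0 u t.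

Lemma pos_mono a a' b u : a' <= a -> pos a b u -> pos a' b u.
Proof. move=> le [t [/andP [ht tb] p]]; exists t; split => //; apply/andP; split => //; lia. Qed.

Definition CWLE N (V : seq nat -> Prop) t := forall d, 1 <= d ->
  (forall u, size u = N -> sumn u = d -> V (incl u t) -> V u) \/
  (forall w, size w = N -> sumn w = d.+1 -> ~ V w -> 0 < nth 0 w t).

Lemma CWLE_ext N (V V' : seq nat -> Prop) t :
  (forall u, size u = N -> V u <-> V' u) -> CWLE N V t -> CWLE N V' t.
Proof.
move=> E H d d1; case: (H d d1) => [L|R]; [left|right].
  move=> u su sd H1; apply/(E u su); apply: (L u su sd).
  by apply/(E (incl u t) (etrans (size_incl u t) su)).
by move=> w sw sd nV; apply: R => // /(E w sw).
Qed.


Section Step.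
Variables (j : nat) (g : seq nat).
Hypotheses (H0 : hv g 0 = 1) (Hu : unimodal g).
Local Notation n := (hv g 1).
Hypothesis (Hn : 1 <= n).
Local Notation k := (peak g).
Local Notation G0 := (G0f j g).
Local Notation W' := (Wm j (delta g)).
Local Notation W := (Wp (hv g 1) g (G0f j g)).

Lemma hv_delta1 : hv (delta g) 1 = n.-1.
Proof.
rewrite hv_deltaS; case: ifP => H; first by rewrite H0 subn1.
have := (peak_spec Hu).2 0; rewrite leqNgt H => /(_ isT); rewrite H0.
by move: (hv g 1) => a; lia.
Qed.

Lemma clG0 u : size u = n -> clb G0 u = clb W' (take n.-1 u).
Proof.
move=> su; apply/clbP/clbP.
  move=> [v [/andP [_ wv] vu]]; exists (take n.-1 v); split => //; exact: mdiv_take.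
move=> [w [ww wu]].
have sw : size w = n.-1 by rewrite (Wm_size ww) hv_delta1.
exists (rcons w 0); split.
  apply/andP; split; first by rewrite nth_rcons sw ltnn eqxx.
  by rewrite -cats1 -{1}sw take_size_cat.
apply/mdivP; split; first by rewrite size_rcons sw su; lia.
move=> i; rewrite nth_rcons sw; case: ltnP => i1.
  by have := (elimT (mdivP _ _) wu).2 i; rewrite nth_take.
by case: (i == n.-1).
Qed.

Lemma G0_W v : size v = n -> G0 v -> W v.
Proof.
move=> sv gv; rewrite Wp_eq //; apply/orP; left; apply/orP; left.
exact: (clb_self gv).
Qed.

Lemma clG0_clW u : size u = n -> clb G0 u -> clb W u.
Proof.
move=> su /clbP [v [gv vu]]; apply/clbP; exists v; split => //.
by apply: G0_W => //; rewrite (mdiv_size vu).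
Qed.

Lemma countG0 d : count (predC (clb G0)) (monos n d) <=
  sumn [seq count (predC (clb W')) (monos n.-1 i) | i <- iota 0 d.+1].
Proof.
have -> : [seq count (predC (clb W')) (monos n.-1 i) | i <- iota 0 d.+1] =
  [seq count (predC (clb W')) x | x <- map (monos n.-1) (iota 0 d.+1)] by rewrite -map_comp.
rewrite -count_flatten -!size_filter -(size_map (take n.-1)).
apply: uniq_leq_size.
  rewrite map_inj_in_uniq ?filter_uniq ?uniq_monos // => x y.
  rewrite !mem_filter !mem_monos => /andP [_ /andP [/eqP sx /eqP dx]] /andP [_ /andP [/eqP sy /eqP dy]].
  by apply: take_inj => //; rewrite dx dy.
move=> y /mapP [x]; rewrite mem_filter mem_monos => /andP [nc /andP [/eqP sx /eqP dx]] ->.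
rewrite mem_filter; apply/andP; split; first by rewrite /= -clG0.
apply/flattenP; exists (monos n.-1 (sumn (take n.-1 x))).
  apply/mapP; exists (sumn (take n.-1 x)) => //; rewrite mem_iota add0n ltnS -dx.
  exact: sumn_take_le.
by rewrite mem_monos size_takel ?eqxx // sx; lia.
Qed.

Lemma bigW' w : size w = n.-1 -> k < sumn w -> clb W' w.
Proof.
move=> sw kw; apply/negPn/negP => nc.
have := HFub j (delta g) (sumn w); rewrite hv_delta1.
have -> : hv (delta g) (sumn w) = 0.
  case e: (sumn w) => [|s]; first by rewrite e in kw.
  rewrite hv_deltaS; case: ifP => // H; rewrite e in kw; lia.
rewrite leqn0 => /eqP c0.
have : has (predC (clb W')) (monos n.-1 (sumn w)).
  by apply/hasP; exists w; [rewrite mem_monos sw !eqxx | exact: nc].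
by rewrite has_count c0.
Qed.

Lemma lowW_aux d u : sumn u <= d -> W u -> sumn u <= k -> clb G0 u.
Proof.
  elim: d u => [|d IH] v vd wv vk.
  all: have sv : size v = n by case/andP: wv => /eqP.
  all: move: wv; rewrite Wp_eq // => /orP [/inJP [[w [gw wv]]|[w [ww [wv ws]]]]|/andP [vC rk]].
  - by apply/clbP; exists w.
  - by move: ws vd; lia.
  - have sizeC : size (Cset (hv g 1) g (G0f j g) (sumn v)) <= hv g (sumn v).
      rewrite /Cset size_filter.
      apply: leq_trans (_ : count (predC (clb G0)) (monos n (sumn v)) <= _).
        apply: sub_count => x /=; apply: contra => cx; apply/orP; left; exact: cx.
      apply: leq_trans (countG0 _) _.
      apply: leq_trans (sum_delta _ _ _); first apply: leq_sumn_map => i _.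
      + by have := HFub j (delta g) i; rewrite hv_delta1.
      + by rewrite H0.
      + exact: (peak_spec Hu).1.
      + exact: vk.
    by move: rk; rewrite (_ : _ - _ = 0) //; apply/eqP; rewrite subn_eq0.
  - by apply/clbP; exists w.
  - by apply: clb_trans (IH w _ ww _) wv; lia.
  - have sizeC : size (Cset (hv g 1) g (G0f j g) (sumn v)) <= hv g (sumn v).
      rewrite /Cset size_filter.
      apply: leq_trans (_ : count (predC (clb G0)) (monos n (sumn v)) <= _).
        apply: sub_count => x /=; apply: contra => cx; apply/orP; left; exact: cx.
      apply: leq_trans (countG0 _) _.
      apply: leq_trans (sum_delta _ _ _); first apply: leq_sumn_map => i _.
      + by have := HFub j (delta g) i; rewrite hv_delta1.
      + by rewrite H0.
      + exact: (peak_spec Hu).1.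
      + exact: vk.
    by move: rk; rewrite (_ : _ - _ = 0) //; apply/eqP; rewrite subn_eq0.
Qed.

Lemma lowW u : W u -> sumn u <= k -> clb G0 u.
Proof. exact: (@lowW_aux (sumn u)). Qed.

Lemma take_pred_take (u : seq nat) : take n.-1 (take n u) = take n.-1 u.
Proof. by rewrite -take_min; congr take; apply/minn_idPl; exact: leq_pred. Qed.

Lemma take_incl (u : seq nat) : n <= size u -> take n.-1 (incl u n.-1) = take n.-1 u.
Proof.
move=> nu; apply: (@eq_from_nth _ 0); first by rewrite !size_take size_incl.
move=> i; rewrite size_take size_incl ifT => [hi|]; last by lia.
by rewrite !nth_take // nth_incl (_ : (i == n.-1) = false) ?addn0 //; apply/eqP; lia.
Qed.

Lemma S1 N : n <= N -> CWLE N (fun u => clb W (take n u) \/ pos n N u) n.-1.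
Proof.
move=> nN d d1; case: (ltnP d k) => dk; [left|right].
  move=> u su sd [H|H].
    left; set x := take n (incl u n.-1).
    have [v [wv vx]] := clbP _ _ H.
    have sx : sumn x <= k.
      apply: leq_trans (sumn_take_le _ _) _; rewrite sumn_incl ?sd // su; lia.
    have gx : clb G0 x := clb_trans (lowW wv (leq_trans (mdiv_sumn vx) sx)) vx.
    have sxn : size x = n by rewrite size_takel // size_incl su.
    rewrite clG0 // /x take_pred_take take_incl ?su // in gx.
    apply: clG0_clW; first by rewrite size_takel // su.
    by rewrite clG0 ?take_pred_take // size_takel // su.
  right; case: H => t [/andP [t1 t2] p]; exists t; split; first by rewrite t1.
  move: p; rewrite nth_incl (_ : (t == n.-1) = false) ?addn0 //; apply/eqP; lia.
move=> w sw sd nV; rewrite lt0n; apply/negP => /eqP w0; apply: (nV); left.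
have z : forall i, n.-1 <= i -> nth 0 w i = 0.
  move=> i ii; case: (ltngtP i n.-1) => [|ni|->] //; first by lia.
  case: (ltnP i N) => iN; last by rewrite nth_default // sw.
  apply/eqP; rewrite -leqn0 leqNgt; apply/negP => p; apply: nV; right.
  by exists i; split => //; apply/andP; split => //; lia.
have st : sumn (take n.-1 w) = sumn w := sumn_take_zero z.
have := @bigW' (take n.-1 w); rewrite size_takel ?sw; last by lia.
move=> /(_ erefl); rewrite st sd => /(_ (leq_ltn_trans dk (ltnSn d))) cw.
apply: clG0_clW; first by rewrite size_takel // sw.
by rewrite clG0 ?take_pred_take // size_takel // sw.
Qed.

Lemma S2 N (u : seq nat) : n <= N -> size u = N ->
  (clb W (take n u) \/ pos n.-1 N u) <-> (clb W' (take n.-1 u) \/ pos n.-1 N u).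
Proof.
move=> nN su; split => [[H|H]|[H|H]]; try by right.
  case: (posnP (nth 0 u n.-1)) => u0; last first.
    by right; exists n.-1; split => //; apply/andP; split => //; lia.
  left; have [v [wv vx]] := clbP _ _ H.
  have sv : size v = n by rewrite (mdiv_size vx) size_takel // su.
  have v0 : nth 0 v n.-1 = 0.
    have := (elimT (mdivP _ _) vx).2 n.-1; rewrite nth_take; last by lia.
    by rewrite u0 leqn0 => /eqP.
  have cv : clb W' (take n.-1 v).
    case: (leqP (sumn v) k) => vk; first by rewrite -clG0 //; exact: lowW.
    apply: bigW'; first by rewrite size_takel // sv; lia.
    rewrite sumn_take_zero // => i ii; case: (ltngtP i n.-1) => [|ni|->] //; first by lia.
    by rewrite nth_default // sv; lia.
  by apply: clb_trans cv _; rewrite -(take_pred_take u); exact: mdiv_take.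
case: (posnP (nth 0 u n.-1)) => u0; last first.
  by right; exists n.-1; split => //; apply/andP; split => //; lia.
left; apply: clG0_clW; first by rewrite size_takel // su.
by rewrite clG0 ?take_pred_take // size_takel // su.
Qed.

End Step.


Fixpoint Good j g : Prop :=
  match j with 0 => True | j'.+1 => hv g 0 = 1 /\ unimodal g /\ Good j' (delta g) end.

Definition Vl j g N i (u : seq nat) : Prop :=
  clb (Wm j g) (take (hv g 1) u) \/ pos (hv g 1 - i) N u.

Lemma Key j g : Good j g -> forall N i, hv g 1 <= N -> i < j -> i < hv g 1 ->
  CWLE N (Vl j g N i) (hv g 1 - i).-1.
Proof.
elim: j g => [|j IH] g // [H0 [Hu HG]] N [|i] nN ij ig.
  rewrite subn0; apply: CWLE_ext (S1 j H0 Hu ig nN) => u su.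
  by rewrite /Vl subn0 Wm_S.
have d1 : hv (delta g) 1 = (hv g 1).-1 := hv_delta1 H0 Hu ltac:(lia).
have := IH (delta g) HG N i ltac:(rewrite d1; lia) ij ltac:(rewrite d1; lia).
rewrite d1 (_ : (hv g 1).-1 - i = hv g 1 - i.+1); last by lia.
apply: CWLE_ext => u su; rewrite /Vl d1 Wm_S.
have n1 : 0 < hv g 1 by lia.
have E := S2 j H0 Hu n1 nN su.
have PQ : pos (hv g 1).-1 N u -> pos (hv g 1 - i.+1) N u by apply: pos_mono; lia.
rewrite (_ : (hv g 1).-1 - i = hv g 1 - i.+1); last by lia.
split => [[B|Q]|[A|Q]]; try by right.
  by case: (proj2 E (or_introl B)) => [A|P]; [left | right; exact: PQ].
by case: (proj1 E (or_introl A)) => [B|P]; [left | right; exact: PQ].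
Qed.

Local Open Scope ring_scope.


Section Poly.
Variable K : fieldType.
Variable n : nat.
Implicit Types (f g s : {mpoly K[n]}) (mm : 'X_{1..n}).

Definition SC (P : 'X_{1..n} -> Prop) (f : {mpoly K[n]}) := forall m, m \in msupp f -> P m.

Lemma gen0 (S : {mpoly K[n]} -> Prop) : gen_ideal S 0.
Proof. exists 0%N, (fun _ => 0), (fun _ => 0); split; [by case | by rewrite big_ord0]. Qed.

Lemma genM (S : {mpoly K[n]} -> Prop) g s : S s -> gen_ideal S (g * s).
Proof. by move=> Ss; exists 1%N, (fun _ => g), (fun _ => s); split => //; rewrite big_ord1. Qed.

Lemma genD (S : {mpoly K[n]} -> Prop) f1 f2 : gen_ideal S f1 -> gen_ideal S f2 -> gen_ideal S (f1 + f2).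
Proof.
move=> [k1 [g1 [s1 [S1 ->]]]] [k2 [g2 [s2 [S2 ->]]]].
exists (k1 + k2)%N, (fun i => match split i with inl a => g1 a | inr b => g2 b end),
  (fun i => match split i with inl a => s1 a | inr b => s2 b end).
split; first by move=> i; case: (split i).
rewrite big_split_ord /=; congr (_ + _); apply: eq_bigr => i _.
  by have e : split (lshift k2 i) = inl i := unsplitK (inl i); rewrite e.
by have e : split (rshift k1 i) = inr i := unsplitK (inr i); rewrite e.
Qed.

Lemma genA (S : {mpoly K[n]} -> Prop) (P : 'X_{1..n} -> Prop) :
  (forall m m', P m -> (m <= m')%MM -> P m') -> (forall s, S s -> SC P s) ->
  forall f, gen_ideal S f -> SC P f.
Proof.
move=> up HS f [k [g [s [Ss ->]]]] m /msupp_sum_le /flattenP [x /mapP [i _ ->]].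
move=> /msuppM_le /allpairsP [[m1 m2] [_ m2s ->]] /=.
by apply: up (HS _ (Ss i) _ m2s) _; exact: lem_addl.
Qed.

Lemma genB (S : {mpoly K[n]} -> Prop) (P : 'X_{1..n} -> Prop) :
  (forall m, P m -> exists m0, S 'X_[m0] /\ (m0 <= m)%MM) ->
  forall f, SC P f -> gen_ideal S f.
Proof.
move=> HP f sc; rewrite (mpolyE f).
move: sc; rewrite /SC; elim: (msupp f) => [|m r IH] H; first by rewrite big_nil; exact: gen0.
rewrite big_cons; apply: genD; last by apply: IH => m' mr; apply: H; rewrite inE mr orbT.
have [m0 [Sm0 le]] := HP m (H m (mem_head _ _)).
by rewrite -{2}(submK le) mpolyXD scalerAl; exact: genM.
Qed.

Notation tl mm := (tval (multinom_val mm)).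

Lemma size_tl mm : size (tl mm) = n.
Proof. exact: size_tuple. Qed.

Lemma nth_tl mm (x : 'I_n) : nth 0%N (tl mm) x = mm x.
Proof. by rewrite (mnm_nth 0%N). Qed.

Lemma nth_tl' mm (x : nat) (xn : (x < n)%N) : nth 0%N (tl mm) x = mm (Ordinal xn).
Proof. by rewrite -nth_tl. Qed.

Lemma lem_mdiv mm mm' : (mm <= mm')%MM -> mdiv (tl mm) (tl mm').
Proof.
move=> /mnm_lepP le; apply/mdivP; split; first by rewrite !size_tl.
move=> i; case: (ltnP i n) => ix; first by rewrite !(nth_tl' _ ix).
by rewrite nth_default // size_tl.
Qed.

Lemma sumn_tl mm : sumn (tl mm) = mdeg mm.
Proof.
rewrite mdegE sumnE big_tuple; apply: eq_bigr => i _; by rewrite mnm_tnth.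
Qed.

Definition mU (t : nat) : 'X_{1..n} := [multinom ((j : nat) == t) | j < n].

Lemma mU_incl mm t : (t < n)%N -> tl (mm + mU t)%MM = incl (tl mm) t.
Proof.
move=> tn; apply: (@eq_from_nth _ 0%N); first by rewrite size_incl !size_tl.
move=> i; rewrite size_tl => ix.
by rewrite (nth_tl' _ ix) nth_incl (nth_tl' _ ix) mnmDE mnmE size_tl tn andbT.
Qed.

Lemma mdeg_mU t : (t < n)%N -> mdeg (mU t) = 1%N.
Proof.
move=> tn; rewrite mdegE (bigD1 (Ordinal tn)) //= mnmE eqxx big1 // => x nx.
rewrite mnmE; case: eqP nx => // e _; case: eqP => // xt; case: e; apply: val_inj; exact: xt.
Qed.

Lemma mU_le t mm : (t < n)%N -> (0 < nth 0%N (tl mm) t)%N -> (mU t <= mm)%MM.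
Proof.
move=> tn p; apply/mnm_lepP => x; rewrite mnmE; case: eqP => // e.
by rewrite -nth_tl e.
Qed.

Lemma inj_mono (Mp : 'X_{1..n} -> Prop) t d f : f \is d.-homog ->
  (forall mm, mdeg mm = d -> Mp (mU t + mm)%MM -> Mp mm) ->
  SC Mp ('X_[mU t] * f) -> SC Mp f.
Proof.
move=> fh HP H mm mmf; apply: HP; first exact: (elimT (dhomogP _ _ _) fh).
by apply: H; rewrite mcoeff_msupp mulrC mcoeffMX -mcoeff_msupp.
Qed.

Lemma surj_all (Mp : 'X_{1..n} -> Prop) d g : g \is d.-homog ->
  (forall mm, mdeg mm = d -> Mp mm) -> SC Mp g.
Proof. by move=> gh HP mm mmg; apply: HP; exact: (elimT (dhomogP _ _ _) gh). Qed.

Lemma surj_mono (Mp : 'X_{1..n} -> Prop) t d g : (t < n)%N -> g \is d.+1.-homog ->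
  (forall mm, mdeg mm = d.+1 -> nth 0%N (tl mm) t = 0%N -> Mp mm) ->
  exists f, f \is d.-homog /\ SC Mp (g - 'X_[mU t] * f).
Proof.
move=> tn gh HP; set U := mU t.
exists (\sum_(mm <- msupp g) (if (U <= mm)%MM then g@_mm *: 'X_[mm - U] else 0)).
split.
  rewrite big_seq; apply: rpred_sum => mm mmg; case: ifP => le; last exact: rpred0.
  apply: rpredZ; rewrite dhomogX; apply/eqP.
  have := mdegD (mm - U)%MM U; rewrite submK // mdeg_mU // (elimT (dhomogP _ _ _) gh mm mmg) => H; change (mdeg (mm - U)%MM = d); lia.
have -> : g - 'X_[U] * (\sum_(mm <- msupp g) (if (U <= mm)%MM then g@_mm *: 'X_[mm - U] else 0))
  = \sum_(mm <- msupp g) (if (U <= mm)%MM then 0 else g@_mm *: 'X_[mm]).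
  rewrite {1}(mpolyE g) mulr_sumr -sumrB; apply: eq_bigr => mm _; case: ifP => le.
    by rewrite -scalerAr -mpolyXD addmC submK // subrr.
  by rewrite mulr0 subr0.
move=> m' /msupp_sum_le /flattenP [x /mapP [mm]]; rewrite mem_filter /= => mmg ->.
case: ifP => le; first by rewrite mcoeff_msupp mcoeff0 eqxx.
move=> /msuppZ_le; rewrite msuppX inE => /eqP ->.
apply: HP; first exact: (elimT (dhomogP _ _ _) gh).
apply/eqP; rewrite -leqn0 leqNgt; apply/negP => p; move: le; rewrite mU_le //.
Qed.

End Poly.


Section H0.
Variables (K : fieldType) (N : nat) (S : {mpoly K[N]} -> Prop).
Local Notation J := (gen_ideal S).

Lemma hilb_all : J 1 -> forall d c, hilb_at J d c -> c = 0%N.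
Proof.
move=> [k [a [s [Ss e]]]] d [|c] // [b [_ [bind _]]].
have Jall : forall f, J f.
  move=> f; exists k, (fun i => f * a i), s; split => //.
  by rewrite -{1}[f]mulr1 e mulr_sumr; apply: eq_bigr => i _; rewrite mulrA.
by have := bind (fun _ => 1) (Jall _) ord0; move/eqP; rewrite oner_eq0.
Qed.

Lemma hilb0_J1 : hilb_at J 0 0 -> J 1.
Proof.
move=> [b [_ [_ bspan]]]; have [a Ja] := bspan 1 (dhomog1 _ _).
by rewrite big_ord0 subr0 in Ja.
Qed.

Lemma hilb0_le1 c : hilb_at J 0 c -> (c <= 1)%N.
Proof.
case: c => [|[|c]] // [b [bh [bind _]]].
pose i0 : 'I_c.+2 := ord0; pose i1 : 'I_c.+2 := Ordinal (isT : (1 < c.+2)%N).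
have n01 : i1 != i0 by [].
set x0 := (b i0)@_0; set x1 := (b i1)@_0.
have cf : forall i m, m != 0%MM -> (b i)@_m = 0.
  by move=> i m nm; apply: (dhomog_nemf_coeff (bh i)); rewrite mdeg_eq0.
have J0 : J 0 := gen0 S.
pose a : 'I_c.+2 -> K := fun i => if i == i0 then x1 else if i == i1 then - x0 else 0.
have sumE : forall a : 'I_c.+2 -> K, (forall i, i != i0 -> i != i1 -> a i = 0) ->
    \sum_(i < c.+2) a i *: b i = a i0 *: b i0 + a i1 *: b i1.
  move=> a' Ha; rewrite (bigD1 i0) //= (bigD1 i1) //= big1 ?addr0 // => i /andP [ni0 ni1].
  by rewrite Ha // scale0r.
have Z : \sum_(i < c.+2) a i *: b i = 0.
  rewrite sumE => [|i ni0 ni1]; last by rewrite /a (negbTE ni0) (negbTE ni1).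
  rewrite /a eqxx (negbTE n01) eqxx; apply/mpolyP => m.
  rewrite mcoeffD !mcoeffZ mcoeff0; case: (eqVneq m 0%MM) => [->|nm].
    by rewrite -/x0 -/x1 mulrC mulNr addrN.
  by rewrite !cf // !mulr0 addr0.
have x10 : x1 = 0 by have := bind a; rewrite Z => /(_ J0 i0); rewrite /a eqxx.
have b10 : b i1 = 0.
  apply/mpolyP => m; rewrite mcoeff0; case: (eqVneq m 0%MM) => [->|nm]; last exact: cf.
  exact: x10.
pose a' : 'I_c.+2 -> K := fun i => (i == i1)%:R.
have := bind a'; rewrite sumE => [|i _ ni1]; last by rewrite /a' (negbTE ni1).
rewrite /a' (negbTE (negbT (introF eqP (fun e => (negP n01) (introT eqP (esym e)))))) eqxx.
rewrite scale0r add0r scale1r b10 => /(_ J0 i1); rewrite eqxx => /eqP; rewrite oner_eq0. by [].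
Qed.
End H0.

Lemma Oseq_h0 (K : fieldType) g : Oseq K g -> hv g 0 = 1%N.
Proof.
case=> sz [lst [N [S [_ Hh]]]].
have := hilb0_le1 (Hh 0%N); case e: (hv g 0) => [|[|c]] // _.
have H0 := Hh 0%N; rewrite e in H0; have J1 := hilb0_J1 H0.
by have := hilb_all J1 (Hh (size g).-1); rewrite /hv nth_last => /lst.
Qed.

Lemma mWL_Good (K : fieldType) j g : mWLseq K j g -> Good j g.
Proof.
elim: j g => [|j IH] g //= [O [U H]]; split; first exact: Oseq_h0 O.
by split => //; exact: IH.
Qed.


Lemma sumn_pos (s : seq nat) : (0 < sumn s)%N -> exists t, (t < size s)%N /\ (0 < nth 0%N s t)%N.
Proof.
elim: s => //= a s IH; case: (posnP a) => [->|ap] /= H.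
  by have [t [ts p]] := IH H; exists t.+1.
by exists 0%N.
Qed.

Unset Implicit Arguments.
Theorem proposition3p2 (K : fieldType)
    (Kchar0 : [pchar K] =i pred0)
    (Kinf : forall s : seq K, exists x : K, x \notin s)
    (m : nat) (hm : (1 <= m)%N) (h : seq nat) (hWL : mWLseq K m h)
    (n : nat) (hn : n = hv h 1) :
  mWLP (@mon_ideal K n (Wm m h)) m.
Proof.
have HG : Good m h := mWL_Good hWL.
pose l (i : 'I_m) : {mpoly K[n]} := if (i < n)%N then 'X_[mU n (n - i).-1] else 0.
exists l => i.
pose Mi (mm : 'X_{1..n}) := clb (Wm m h) (tval (multinom_val mm)) \/ pos (n - i) n (tval (multinom_val mm)).
have up : forall mm mm', Mi mm -> (mm <= mm')%MM -> Mi mm'.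
  move=> mm mm' [H|[t [tr p]]] le; [left | right].
    exact: clb_trans H (lem_mdiv le).
  exists t; split => //; apply: leq_trans p _.
  by have := (elimT (mdivP _ _) (lem_mdiv le)).2 t.
have JE : forall f, gen_ideal (fun f => @mon_ideal K n (Wm m h) f \/ exists j : 'I_m, (j < i)%N /\ f = l j) f
    <-> SC Mi f.
  move=> f; split.
    apply: genA => // s [Hs|[j [ji ->]]].
      move=> mm mms; left; move: mm mms; apply: (genA (P := fun mm => clb (Wm m h) (tval (multinom_val mm)))) Hs.
        by move=> mm mm' H le; exact: clb_trans H (lem_mdiv le).
      move=> s' [u [Wu ->]] mm; rewrite msuppX inE => /eqP ->; exact: clb_self.
    rewrite /l; case: ifP => jn mm; last by rewrite mcoeff_msupp mcoeff0 eqxx.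
    rewrite msuppX inE => /eqP ->; right; exists (n - j).-1; split.
      apply/andP; split; lia.
    have tn : ((n - j).-1 < n)%N by lia.
    rewrite (nth_tl' _ tn).
    by rewrite mnmE /= eqxx.
  apply: genB => mm [H|[t [/andP [t1 t2] p]]].
    have [v [Wv vmm]] := clbP _ _ H.
    have sv : size v = n by rewrite (mdiv_size vmm) size_tl.
    pose m0 : 'X_{1..n} := Multinom (Tuple (introT eqP sv)).
    exists m0; split.
      left; rewrite -[X in mon_ideal _ X]mul1r; apply: genM; exists m0; split => //.
    apply/mnm_lepP => x; rewrite -!nth_tl.
    exact: (elimT (mdivP _ _) vmm).2 x.
  have j1 : ((n - t).-1 < m)%N by have := ltn_ord i; lia.
  exists (mU n t); split; last exact: mU_le.
  right; exists (Ordinal j1); split; first by rewrite /=; lia.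
  rewrite /l /= ifT; last by lia.
  by congr 'X_[mU _ _]; lia.
have VE : forall mm, Vl m h n i (tval (multinom_val mm)) <-> Mi mm.
  by move=> mm; rewrite /Vl -hn take_oversize // size_tl.
case: (ltnP i n) => iN.
  have CW : CWLE n (Vl m h n i) (n - i).-1.
    by have := @Key m h HG n i; rewrite -hn; apply => //; exact: ltn_ord.
  set t := (n - i).-1 in CW.
  have tn : (t < n)%N by rewrite /t; lia.
  have li : l i = 'X_[mU n t] by rewrite /l iN.
  rewrite li; split.
    by rewrite dhomogX; apply/eqP; change (mdeg (mU n t) = 1%N); exact: mdeg_mU.
  move=> d d1; case: (CW d d1) => [L|R]; [left|right].
    move=> f fh /JE H; apply/JE; apply: (inj_mono fh) H => mm dm H.
    apply/VE; apply: (L _ (size_tl mm)); first by rewrite sumn_tl; exact: dm.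
    by rewrite -mU_incl // addmC; apply/VE.
  move=> gg gh; have [f [fh Hf]] : exists f, f \is d.-homog /\ SC Mi (gg - 'X_[mU n t] * f).
    apply: surj_mono => // mm dm z; apply/VE; apply: NNPP => nV.
    have := R _ (size_tl mm) _ nV; rewrite z ltnn => H; apply: notF; apply: H.
    by rewrite sumn_tl; exact: dm.
  by exists f; split => //; apply/JE.
have li : l i = 0 by rewrite /l ltnNge iN.
rewrite li; split; first exact: rpred0.
move=> d d1; right => gg gh; exists 0; split; first exact: rpred0.
rewrite mulr0 subr0; apply/JE; apply: surj_all gh _ => mm dm; right.
have pos0 : (0 < sumn (tval (multinom_val mm)))%N.
  by rewrite sumn_tl; move: dm; change (mdeg mm = d.+1 -> (0 < mdeg mm)%N) => ->.
have [t [ts p]] := sumn_pos pos0.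
exists t; split => //; rewrite size_tl in ts; apply/andP; split => //; lia.
Qed.
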